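(* Let $k\ge1$ be an integer, $a,b\in(\frac1{10},10)$, $t_1\ge0$ and $C>0$. There exists a uniformly $C^1$, uniformly elliptic real $2\times2$ matrix function $A$ on $\mathbb{T}^2\times\mathbb{R}$ with $$A=\begin{pmatrix}a&0\\0&a\end{pmatrix}\text{ for }t\le t_1,\qquad A=\begin{pmatrix}a&0\\0&b\end{pmatrix}\text{ for }t\ge t_1+C,$$ belonging to the regularity class $R(10,\frac{10\sqrt\pi}{C})$, such that $u=\cos(kx)e^{-k\sqrt a\,t}$ solves $\ddot u+\operatorname{div}(A\nabla u)=0$ in $\mathbb{T}^2\times\mathbb{R}$.
   Context: $\mathbb{T}^2=(\mathbb{R}/2\pi\mathbb{Z})^2$ with coordinates $(x,y)$; $t$ the third coordinate. $\ddot u+\operatorname{div}(A\nabla u)$ means $\partial_t^2u+\sum_{i,j\in\{x,y\}}\partial_i(A_{ij}\partial_ju)$. Regularity class $R(\Lambda,C)$: $\Lambda^{-1}|\xi|^2\le\xi^TA\xi\le\Lambda|\xi|^2$ for all $\xi\in\mathbb{R}^2$ at every point, and the entries of $A$ are $C^1$ with all first partial derivatives in $x,y,t$ bounded by $C$ in absolute value. *)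

(* Defs.v *)
From Stdlib Require Import Reals.
From Coquelicot Require Import Coquelicot.
Open Scope R_scope.

Inductive ix := ix_x | ix_y.

(* A matrix field on T^2 x R: entries as functions of (x, y, t) : R^3. *)
Definition matfield := ix -> ix -> R -> R -> R -> R.

Definition pdx (f : R -> R -> R -> R) (x y t : R) : R := Derive (fun s => f s y t) x.
Definition pdy (f : R -> R -> R -> R) (x y t : R) : R := Derive (fun s => f x s t) y.
Definition pdt (f : R -> R -> R -> R) (x y t : R) : R := Derive (fun s => f x y s) t.

Definition cont3 (g : R -> R -> R -> R) : Prop :=
  forall x y t eps, 0 < eps -> exists delta, 0 < delta /\
    forall x' y' t', Rabs (x' - x) < delta -> Rabs (y' - y) < delta ->
      Rabs (t' - t) < delta -> Rabs (g x' y' t' - g x y t) < eps.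

Definition C1_3 (g : R -> R -> R -> R) : Prop :=
  (forall x y t, ex_derive (fun s => g s y t) x /\ ex_derive (fun s => g x s t) y
                 /\ ex_derive (fun s => g x y s) t)
  /\ cont3 (pdx g) /\ cont3 (pdy g) /\ cont3 (pdt g).

(* A is a function on T^2 x R = (R/2piZ)^2 x R: 2pi-periodic in x and y. *)
Definition torus_periodic (A : matfield) : Prop :=
  forall i j x y t, A i j (x + 2 * PI) y t = A i j x y t /\
                    A i j x (y + 2 * PI) t = A i j x y t.

Definition qform (A : matfield) (x y t xi1 xi2 : R) : R :=
  xi1 * xi1 * A ix_x ix_x x y t + xi1 * xi2 * A ix_x ix_y x y t
  + xi2 * xi1 * A ix_y ix_x x y t + xi2 * xi2 * A ix_y ix_y x y t.

Definition reg_class (Lam Cb : R) (A : matfield) : Prop :=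
  (forall x y t xi1 xi2,
      / Lam * (xi1 ^ 2 + xi2 ^ 2) <= qform A x y t xi1 xi2 /\
      qform A x y t xi1 xi2 <= Lam * (xi1 ^ 2 + xi2 ^ 2))
  /\ (forall i j, C1_3 (A i j))
  /\ (forall i j x y t,
        Rabs (pdx (A i j) x y t) <= Cb /\ Rabs (pdy (A i j) x y t) <= Cb /\
        Rabs (pdt (A i j) x y t) <= Cb).

Definition diag2 (d1 d2 : R) (i j : ix) : R :=
  match i, j with
  | ix_x, ix_x => d1
  | ix_y, ix_y => d2
  | _, _ => 0
  end.

Definition flux (A : matfield) (u : R -> R -> R -> R) (i : ix) (x y t : R) : R :=
  A i ix_x x y t * pdx u x y t + A i ix_y x y t * pdy u x y t.

Definition solves_eq (A : matfield) (u : R -> R -> R -> R) : Prop :=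
  forall x y t,
    (forall x' y' t', ex_derive (fun s => u s y' t') x' /\
                      ex_derive (fun s => u x' s t') y' /\
                      ex_derive (fun s => u x' y' s) t') /\
    ex_derive (fun s => pdt u x y s) t /\
    ex_derive (fun s => flux A u ix_x s y t) x /\
    ex_derive (fun s => flux A u ix_y x s t) y /\
    Derive (fun s => pdt u x y s) t
    + Derive (fun s => flux A u ix_x s y t) x
    + Derive (fun s => flux A u ix_y x s t) y = 0.

(* Main.v *)
Require Import Defs.
From Stdlib Require Import Reals Lra.
From Coquelicot Require Import Coquelicot.
Open Scope R_scope.
Ltac rring := match goal with |- ?a = ?b => change (@eq R a b) end; ring.

Lemma lip_cont (f : R -> R) (L : R) (x : R) : 0 < L ->
  (forall s s', Rabs (f s - f s') <= L * Rabs (s - s')) -> continuous f x.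
Proof.
intros HL Hf. unfold continuous. apply filterlim_locally. intros eps.
assert (He : 0 < eps / L) by (apply Rdiv_lt_0_compat; [apply cond_pos|lra]).
exists (mkposreal _ He). intros y Hy.
change (Rabs (f y - f x) < eps).
change (Rabs (y - x) < eps / L) in Hy.
specialize (Hf y x).
apply Rle_lt_trans with (1 := Hf).
apply Rmult_lt_compat_l with (r := L) in Hy; [|lra].
replace (L * (eps / L)) with (pos eps) in Hy by (field; lra). exact Hy.
Qed.

Definition clamp (s : R) := (Rabs s - Rabs (s - 1) + 1) / 2.
Definition phi (s : R) := 6 * clamp s * (1 - clamp s).

Lemma clamp_lip s s' : Rabs (clamp s - clamp s') <= Rabs (s - s').
Proof.
unfold clamp.
replace ((Rabs s - Rabs (s - 1) + 1) / 2 - (Rabs s' - Rabs (s' - 1) + 1) / 2)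
 with ((Rabs s - Rabs s') / 2 + (Rabs (s'-1) - Rabs (s-1)) / 2) by field.
eapply Rle_trans. apply Rabs_triang.
rewrite !Rabs_div by lra. rewrite (Rabs_pos_eq 2) by lra.
pose proof (Rabs_triang_inv2 s s'). pose proof (Rabs_triang_inv2 (s'-1) (s-1)).
replace (s' - 1 - (s - 1)) with (-(s - s')) in H0 by ring. rewrite Rabs_Ropp in H0.
lra.
Qed.

Lemma clamp_range s : 0 <= clamp s <= 1.
Proof. unfold clamp. unfold Rabs; repeat destruct Rcase_abs; lra. Qed.

Lemma clamp_le0 s : s <= 0 -> clamp s = 0.
Proof. intros. unfold clamp. rewrite Rabs_left1, Rabs_left1 by lra. field. Qed.
Lemma clamp_ge1 s : 1 <= s -> clamp s = 1.
Proof. intros. unfold clamp. rewrite Rabs_pos_eq, Rabs_pos_eq by lra. field. Qed.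
Lemma clamp_mid s : 0 <= s <= 1 -> clamp s = s.
Proof. intros. unfold clamp. rewrite Rabs_pos_eq, Rabs_left1 by lra. field. Qed.

Lemma phi_lip s s' : Rabs (phi s - phi s') <= 6 * Rabs (s - s').
Proof.
unfold phi. pose proof (clamp_lip s s'). pose proof (clamp_range s). pose proof (clamp_range s').
replace (6 * clamp s * (1 - clamp s) - 6 * clamp s' * (1 - clamp s'))
 with (6 * ((clamp s - clamp s') * (1 - clamp s - clamp s'))) by ring.
rewrite Rabs_mult, Rabs_mult, (Rabs_pos_eq 6) by lra.
apply Rmult_le_compat_l; [lra|].
rewrite <- (Rmult_1_r (Rabs (s - s'))).
apply Rmult_le_compat; try apply Rabs_pos; auto.
unfold Rabs; destruct Rcase_abs; lra.
Qed.

Lemma phi_cont x : continuous phi x.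
Proof. apply (lip_cont phi 6); [lra|apply phi_lip]. Qed.

Lemma phi_range s : 0 <= phi s <= 3/2.
Proof. unfold phi. pose proof (clamp_range s). pose proof (pow2_ge_0 (1 - 2 * clamp s)). split; nra. Qed.

Definition G (s : R) := RInt phi 0 s.

Lemma phi_exRInt a b : ex_RInt phi a b.
Proof. apply (ex_RInt_continuous (V:=R_CompleteNormedModule)). intros; apply phi_cont. Qed.

Lemma G_deriv s : is_derive G s (phi s).
Proof.
apply (is_derive_RInt (V:=R_NormedModule) phi G 0 s). apply filter_forall. intros; apply (RInt_correct (V:=R_CompleteNormedModule)), phi_exRInt.
apply phi_cont.
Qed.

Lemma G_le0 s : s <= 0 -> G s = 0.
Proof.
intros. unfold G. rewrite (RInt_ext phi (fun _ => 0)).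
rewrite RInt_const. unfold scal; simpl. unfold mult; simpl. apply Rmult_0_r.
intros. unfold phi. rewrite clamp_le0. rewrite Rmult_0_r, Rmult_0_l; reflexivity.
rewrite Rmax_left in H0 by lra. lra.
Qed.

Lemma G_mid s : 0 <= s <= 1 -> G s = 3 * s^2 - 2 * s^3.
Proof.
intros. unfold G. rewrite (RInt_ext phi (Derive (fun x => 3 * x^2 - 2 * x^3))).
rewrite RInt_Derive. change (@eq R (3 * s^2 - 2 * s^3 - (3 * 0^2 - 2 * 0^3)) (3 * s^2 - 2 * s^3)). ring.
intros; auto_derive; auto.
intros. apply (continuous_ext (T:=R_UniformSpace) (U:=R_UniformSpace) (fun x => 6 * x - 6 * x^2)).
intros; apply sym_eq, is_derive_unique; auto_derive; auto; ring.
apply (ex_derive_continuous (K:=R_AbsRing) (V:=R_NormedModule)); auto_derive; auto.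
intros. rewrite Rmin_left, Rmax_right in H0 by lra.
rewrite (is_derive_unique _ _ (6*x - 6*x^2)). unfold phi. rewrite clamp_mid by lra. rring.
auto_derive; auto; ring.
Qed.

Lemma G_ge1 s : 1 <= s -> G s = 1.
Proof.
intros. unfold G.
rewrite <- (RInt_Chasles (V:=R_CompleteNormedModule) phi 0 1 s) by apply phi_exRInt.
fold (G 1). rewrite G_mid by lra.
rewrite (RInt_ext phi (fun _ => 0)).
rewrite RInt_const. unfold scal, plus; simpl. unfold mult; simpl.
change (@eq R (3 * 1 ^ 2 - 2 * 1 ^ 3 + (s - 1) * 0) 1). ring.
intros. unfold phi. rewrite clamp_ge1. rewrite Rminus_diag, Rmult_0_r; reflexivity.
rewrite Rmin_left in H0 by lra. lra.
Qed.

Lemma G_range s : 0 <= G s <= 1.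
Proof.
destruct (Rle_lt_dec s 0). rewrite G_le0 by lra; lra.
destruct (Rle_lt_dec 1 s). rewrite G_ge1 by lra; lra.
rewrite G_mid by lra. split. nra.
assert (0 <= (1 - s)^2 * (1 + 2 * s)) by (apply Rmult_le_pos; nra). nra.
Qed.

Section S.
Variables a b t1 C : R.
Definition gfun (t : R) := a + (b - a) * G ((t - t1) / C).
Definition gd (t : R) := (b - a) * phi ((t - t1) / C) / C.

Lemma gfun_deriv t : 0 < C -> is_derive gfun t (gd t).
Proof.
intros HC. unfold gfun, gd.
assert (H1 : is_derive (fun t => G ((t - t1) / C)) t (/ C * phi ((t - t1) / C))).
{ apply (is_derive_comp G (fun t => (t - t1) / C)). apply G_deriv.
  auto_derive. auto. rring. }
pose proof (is_derive_scal _ _ (b - a) _ H1) as H2.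
pose proof (is_derive_plus _ _ _ _ _ (is_derive_const a t) H2) as H3.
unfold plus, scal in H3; simpl in H3. unfold mult in H3; simpl in H3. replace ((b - a) * phi ((t - t1) / C) / C) with (zero + (b - a) * (/ C * phi ((t - t1) / C))).
exact H3. unfold zero; simpl. field. lra.
Qed.

End S.

Lemma gfun_range a b t1 C t : 1/10 < a < 10 -> 1/10 < b < 10 -> 1/10 < gfun a b t1 C t < 10.
Proof. intros. unfold gfun. destruct (G_range ((t - t1) / C)) as [g0 g1].
set (g := G ((t - t1) / C)) in *.
assert (0 <= g * (b - 1/10)) by (apply Rmult_le_pos; lra).
assert (0 <= (1 - g) * (a - 1/10)) by (apply Rmult_le_pos; lra).
assert (0 <= g * (10 - b)) by (apply Rmult_le_pos; lra).
assert (0 <= (1 - g) * (10 - a)) by (apply Rmult_le_pos; lra).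
split; nra. Qed.

Lemma gd_lip a b t1 C : 0 < C -> forall s s', Rabs (gd a b t1 C s - gd a b t1 C s') <= ((Rabs (b - a) + 1) * 6 / (C * C)) * Rabs (s - s').
Proof.
intros HC s s'. unfold gd.
replace ((b - a) * phi ((s - t1) / C) / C - (b - a) * phi ((s' - t1) / C) / C)
  with ((b - a) / C * (phi ((s - t1) / C) - phi ((s' - t1) / C))) by (field; lra).
rewrite Rabs_mult.
pose proof (phi_lip ((s - t1) / C) ((s' - t1) / C)).
replace ((s - t1) / C - (s' - t1) / C) with ((s - s') / C) in H by (field; lra).
rewrite Rabs_div in H by lra. rewrite Rabs_div by lra. rewrite (Rabs_pos_eq C) in * by lra.
pose proof (Rabs_pos (b - a)). pose proof (Rabs_pos (s - s')).
pose proof (Rabs_pos (phi ((s - t1) / C) - phi ((s' - t1) / C))).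
apply Rle_trans with (Rabs (b - a) / C * (6 * (Rabs (s - s') / C))).
apply Rmult_le_compat_l; auto. apply Rdiv_le_0_compat; lra.
unfold Rdiv. rewrite Rinv_mult.
assert (0 < / C) by (apply Rinv_0_lt_compat; lra).
assert (0 <= Rabs (b-a) * /C * /C * Rabs (s - s')) by (repeat apply Rmult_le_pos; lra).
nra.
Qed.

Definition Amat (a b t1 C : R) : matfield := fun i j x y t =>
  match i, j with ix_x, ix_x => a | ix_y, ix_y => gfun a b t1 C t | _, _ => 0 end.

Lemma cont3_const c : cont3 (fun _ _ _ => c).
Proof. intros x y t eps He. exists 1. split. lra. intros. rewrite Rminus_diag, Rabs_R0. lra. Qed.

Lemma cont3_t (f : R -> R) L : 0 < L -> (forall s s', Rabs (f s - f s') <= L * Rabs (s - s')) ->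
  cont3 (fun _ _ t => f t).
Proof.
intros HL Hf x y t eps He. exists (eps / L). split. apply Rdiv_lt_0_compat; lra.
intros. eapply Rle_lt_trans. apply Hf.
apply Rmult_lt_compat_l with (r := L) in H1; [|lra].
replace (L * (eps / L)) with eps in H1 by (field; lra). exact H1.
Qed.

Lemma pd_const c x y t : pdx (fun _ _ _ => c) x y t = 0 /\ pdy (fun _ _ _ => c) x y t = 0 /\ pdt (fun _ _ _ => c) x y t = 0.
Proof. unfold pdx, pdy, pdt. rewrite !Derive_const. auto. Qed.

Lemma pd_g a b t1 C x y t : 0 < C -> pdx (fun _ _ t => gfun a b t1 C t) x y t = 0 /\
  pdy (fun _ _ t => gfun a b t1 C t) x y t = 0 /\ pdt (fun _ _ t => gfun a b t1 C t) x y t = gd a b t1 C t.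
Proof. intros. unfold pdx, pdy, pdt. rewrite !Derive_const. split; auto. split; auto.
apply is_derive_unique. apply gfun_deriv; auto. Qed.

Lemma C1_const c : C1_3 (fun _ _ _ => c).
Proof.
split. intros; repeat split; apply ex_derive_const.
assert (E : forall x y t, pdx (fun _ _ _ => c) x y t = 0 /\ pdy (fun _ _ _ => c) x y t = 0 /\ pdt (fun _ _ _ => c) x y t = 0) by apply pd_const.
repeat split; intros x y t eps He; exists 1; split; try lra; intros;
 destruct (E x y t) as [E1 [E2 E3]]; destruct (E x' y' t') as [F1 [F2 F3]];
 [rewrite E1, F1 | rewrite E2, F2 | rewrite E3, F3]; rewrite Rminus_diag, Rabs_R0; lra.
Qed.

Lemma C1_g a b t1 C : 0 < C -> C1_3 (fun _ _ t => gfun a b t1 C t).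
Proof.
intros HC. split. intros; repeat split; try apply ex_derive_const.
eexists; apply gfun_deriv; auto.
assert (E := fun x y t => pd_g a b t1 C x y t HC).
assert (HL : 0 < (Rabs (b - a) + 1) * 6 / (C * C)).
{ pose proof (Rabs_pos (b-a)). apply Rdiv_lt_0_compat; nra. }
repeat split.
- intros x y t eps He; exists 1; split; try lra; intros.
  rewrite (proj1 (E x y t)), (proj1 (E x' y' t')), Rminus_diag, Rabs_R0; lra.
- intros x y t eps He; exists 1; split; try lra; intros.
  rewrite (proj1 (proj2 (E x y t))), (proj1 (proj2 (E x' y' t'))), Rminus_diag, Rabs_R0; lra.
- intros x y t eps He. destruct (cont3_t (gd a b t1 C) _ HL (gd_lip a b t1 C HC) x y t eps He) as [d [Hd Hd']].
  exists d; split; auto; intros.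
  rewrite (proj2 (proj2 (E x y t))), (proj2 (proj2 (E x' y' t'))). apply (Hd' x' y' t'); auto.
Qed.

Lemma sqrtPI : 3/2 <= sqrt PI.
Proof.
pose proof PI2_3_2. rewrite <- (sqrt_square (3/2)) by lra. apply sqrt_le_1_alt. lra.
Qed.

Lemma gd_bound a b t1 C t : 1/10 < a < 10 -> 1/10 < b < 10 -> 0 < C ->
  Rabs (gd a b t1 C t) <= 10 * sqrt PI / C.
Proof.
intros Ha Hb HC. unfold gd, Rdiv. rewrite !Rabs_mult.
rewrite (Rabs_pos_eq (/ C)) by (left; apply Rinv_0_lt_compat; lra).
apply Rmult_le_compat_r. left; apply Rinv_0_lt_compat; lra.
pose proof (phi_range ((t - t1) * / C)). rewrite (Rabs_pos_eq (phi _)) by lra.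
pose proof sqrtPI. pose proof (Rabs_pos (b - a)).
assert (Rabs (b - a) <= 10) by (unfold Rabs; destruct Rcase_abs; lra).
nra.
Qed.

Section U.
Variables (k : nat) (a : R).
Definition uu := fun x y t : R => cos (INR k * x) * exp (- (INR k * sqrt a * t)).

Lemma pdx_u x y t : pdx uu x y t = - INR k * sin (INR k * x) * exp (- (INR k * sqrt a * t)).
Proof. unfold pdx, uu. apply is_derive_unique. auto_derive; auto. ring. Qed.
Lemma pdy_u x y t : pdy uu x y t = 0.
Proof. unfold pdy, uu. apply Derive_const. Qed.
Lemma pdt_u x y t : pdt uu x y t = - (INR k * sqrt a) * cos (INR k * x) * exp (- (INR k * sqrt a * t)).
Proof. unfold pdt, uu. apply is_derive_unique. auto_derive; auto. ring. Qed.
End U.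

Theorem mainTheorem10 (k : nat) (a b t1 C : R) :
  (1 <= k)%nat ->
  1 / 10 < a < 10 -> 1 / 10 < b < 10 ->
  0 <= t1 -> 0 < C ->
  exists A : matfield,
    torus_periodic A /\
    (forall i j x y t, t <= t1 -> A i j x y t = diag2 a a i j) /\
    (forall i j x y t, t1 + C <= t -> A i j x y t = diag2 a b i j) /\
    reg_class 10 (10 * sqrt PI / C) A /\
    solves_eq A (fun x y t => cos (INR k * x) * exp (- (INR k * sqrt a * t))).
Proof.
intros Hk Ha Hb Ht1 HC.
exists (Amat a b t1 C).
split; [|split; [|split; [|split]]].
- intros i j x y t. destruct i, j; simpl; auto.
- intros i j x y t Ht. destruct i, j; simpl; auto.
  unfold gfun. rewrite G_le0. ring.
  apply Rmult_le_reg_r with C; auto. unfold Rdiv. rewrite Rmult_assoc, Rinv_l by lra. lra.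
- intros i j x y t Ht. destruct i, j; simpl; auto.
  unfold gfun. rewrite G_ge1. ring.
  apply Rmult_le_reg_r with C; auto. unfold Rdiv. rewrite Rmult_assoc, Rinv_l by lra. lra.
- split; [|split].
  + intros x y t xi1 xi2. unfold qform; simpl.
    pose proof (gfun_range a b t1 C t Ha Hb).
    pose proof (pow2_ge_0 xi1). pose proof (pow2_ge_0 xi2).
    replace (/10) with (1/10) by field. split; nra.
  + intros i j; destruct i, j; simpl; try apply C1_const. apply C1_g; auto.
  + intros i j x y t.
    assert (Hb0 : 0 <= 10 * sqrt PI / C).
    { apply Rdiv_le_0_compat; [|lra]. pose proof (sqrt_pos PI); lra. }
    destruct i, j; unfold Amat; simpl.
    * destruct (pd_const a x y t) as [E1 [E2 E3]]; rewrite E1, E2, E3, Rabs_R0; auto.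
    * destruct (pd_const 0 x y t) as [E1 [E2 E3]]; rewrite E1, E2, E3, Rabs_R0; auto.
    * destruct (pd_const 0 x y t) as [E1 [E2 E3]]; rewrite E1, E2, E3, Rabs_R0; auto.
    * destruct (pd_g a b t1 C x y t HC) as [E1 [E2 E3]]; rewrite E1, E2, E3, Rabs_R0.
      split; auto. split; auto. apply gd_bound; auto.
- change (solves_eq (Amat a b t1 C) (uu k a)).
  set (K := INR k). set (sa := sqrt a).
  assert (Fx : forall s y t, flux (Amat a b t1 C) (uu k a) ix_x s y t = a * (- K * sin (K * s) * exp (- (K * sa * t)))).
  { intros. unfold flux, Amat; simpl. rewrite pdx_u, pdy_u. fold K sa. ring. }
  assert (Fy : forall x s t, flux (Amat a b t1 C) (uu k a) ix_y x s t = 0).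
  { intros. unfold flux, Amat; simpl. rewrite pdy_u. ring. }
  assert (Pt : forall x y s, pdt (uu k a) x y s = - (K * sa) * cos (K * x) * exp (- (K * sa * s))).
  { intros. rewrite pdt_u. reflexivity. }
  intros x y t. split; [|split; [|split; [|split]]].
  + intros; unfold uu; repeat split; auto_derive; auto.
  + apply (ex_derive_ext (fun s => - (K * sa) * cos (K * x) * exp (- (K * sa * s)))).
    intros; rewrite Pt; reflexivity. auto_derive; auto.
  + apply (ex_derive_ext (fun s => a * (- K * sin (K * s) * exp (- (K * sa * t))))).
    intros; rewrite Fx; reflexivity. auto_derive; auto.
  + apply (ex_derive_ext (fun s => 0)).
    intros; rewrite Fy; reflexivity. apply ex_derive_const.
  + rewrite (Derive_ext (fun s => pdt (uu k a) x y s) (fun s => - (K * sa) * cos (K * x) * exp (- (K * sa * s)))) by (intros; apply Pt).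
    rewrite (Derive_ext (fun s => flux (Amat a b t1 C) (uu k a) ix_x s y t) (fun s => a * (- K * sin (K * s) * exp (- (K * sa * t))))) by (intros; apply Fx).
    rewrite (Derive_ext (fun s => flux (Amat a b t1 C) (uu k a) ix_y x s t) (fun s => 0)) by (intros; apply Fy).
    rewrite Derive_const.
    rewrite (is_derive_unique _ _ (- (K * sa) * cos (K * x) * (exp (- (K * sa * t)) * (- (K * sa))))) by (auto_derive; auto; ring).
    rewrite (is_derive_unique _ _ (a * (- K * (K * cos (K * x)) * exp (- (K * sa * t))))) by (auto_derive; auto; ring).
    assert (sa * sa = a) by (apply sqrt_sqrt; lra).
    replace (- (K * sa) * cos (K * x) * (exp (- (K * sa * t)) * - (K * sa)))
      with (K * K * (sa * sa) * cos (K * x) * exp (- (K * sa * t))) by ring.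
    rewrite H. ring.
Qed.
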